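(* Let $\Omega = \{-1\} \cup [0,\infty)$, let $E$ be the Banach space of all bounded continuous real functions on $\Omega$ with the supremum norm, and let $$C = \{ x \in E : 0 \le x(u) \le 1 \text{ for all } u \in \Omega,\ |x(u_1)-x(u_2)| \le |u_1-u_2| \text{ for all } u_1,u_2 \in [0,\infty)\}.$$ For $x \in C$ and $v \ge 0$ put $\alpha_x(v) = \sup\{ x(s) : s \in \{-1\}\cup[v,\infty)\}$. For $t \in [0,1]$ and $x \in C$ define $T(t)x$ on $\Omega$ by $$(T(t)x)(u) = \begin{cases} x(-1), & u=-1,\\ x(u-t), & u \ge t,\\ x(0)-t+u, & 0\le u\le t \text{ and } 1-\alpha_x(1-t+u) \le x(0)-t+u,\\ x(0)+t-u, & 0\le u\le t \text{ and } 1-\alpha_x(1-t+u) \ge x(0)+t-u,\\ 1-\alpha_x(1-t+u), & 0 \le u \le t \text{ and } |1-\alpha_x(1-t+u)-x(0)| \le t-u. \end{cases}$$ Fix $x \in C$, $t \in [0,1]$, and $u_1,u_2$ with $0 \le u_1 \le u_2 \le t$. Then: (i) if $1-\alpha_x(1-t+u_1) < (T(t)x)(u_2) - u_2 + u_1$, then $(T(t)x)(u_1) = x(0)-t+u_1$ and $(T(t)x)(u_2) = x(0)-t+u_2$; (ii) if $1-\alpha_x(1-t+u_1) > (T(t)x)(u_2) + u_2 - u_1$, then $(T(t)x)(u_1) = x(0)+t-u_1$ and $(T(t)x)(u_2) = x(0)+t-u_2$; (iii) if $|1-\alpha_x(1-t+u_1) - (T(t)x)(u_2)| \le u_2 - u_1$,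 then $(T(t)x)(u_1) = 1-\alpha_x(1-t+u_1)$. *)

(* Defs.v *)
From HB Require Import structures.
From mathcomp Require Import all_boot all_order all_algebra.
From mathcomp Require Import all_classical all_reals all_analysis.
Set Implicit Arguments. Unset Strict Implicit. Unset Printing Implicit Defensive.
Import Order.TTheory GRing.Theory Num.Theory.
Import numFieldNormedType.Exports.
Local Open Scope classical_set_scope.
Local Open Scope ring_scope.

Definition Omega (R : realType) : set R := [set u | u = -1 \/ 0 <= u].

(* Elements of E are represented by functions R -> R, only their values on
   Omega matter: bounded and continuous on Omega. *)
Definition inE (R : realType) (x : R -> R) : Prop :=
  (exists M : R, forall u, @Omega R u -> `|x u| <= M) /\
  {within @Omega R, continuous x}.

Definition inC (R : realType) (x : R -> R) : Prop :=
  inE x /\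
  (forall u, @Omega R u -> 0 <= x u <= 1) /\
  (forall u1 u2, 0 <= u1 -> 0 <= u2 -> `|x u1 - x u2| <= `|u1 - u2|).

Definition alpha (R : realType) (x : R -> R) (v : R) : R :=
  sup [set x s | s in [set s | s = -1 \/ v <= s]].

(* (T(t)x)(u) for u in Omega; the five (overlapping but consistent) cases
   of the paper are rendered by an if-then-else chain. *)
Definition Tt (R : realType) (t : R) (x : R -> R) (u : R) : R :=
  if u == -1 then x (-1)
  else if t <= u then x (u - t)
  else let a := 1 - alpha x (1 - t + u) in
       if a <= x 0 - t + u then x 0 - t + u
       else if x 0 + t - u <= a then x 0 + t - u
       else a.

(* Main.v *)
Require Import Defs.
From HB Require Import structures.
From mathcomp Require Import all_boot all_order all_algebra.
From mathcomp Require Import all_classical all_reals all_analysis.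
From mathcomp Require Import ring lra.
Import Order.TTheory GRing.Theory Num.Theory.
Import numFieldNormedType.Exports.
Local Open Scope ring_scope.
Set Implicit Arguments. Unset Strict Implicit.

Section H.
Variables (R : realType) (x : R -> R).
Hypothesis hx : inC x.

Lemma alpha_ub v s : 0 <= v -> (s = -1 \/ v <= s) -> x s <= alpha x v.
Proof.
move=> v0 hs; rewrite /alpha.
have hub : has_ubound [set x s | s in [set s | s = -1 \/ v <= s]].
  exists 1 => y [s' hs' <-]; case: hx => _ [h01 _].
  have : 0 <= x s' <= 1.
    apply: h01; case: hs' => [->|h]; [by left|right; exact: le_trans h].
  by case/andP.
by apply: ub_le_sup => //; exists s.
Qed.

Lemma alpha_ge v y : (forall s, (s = -1 \/ v <= s) -> x s <= y) -> alpha x v <= y.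
Proof.
move=> h; apply: ge_sup; first by exists (x (-1)), (-1) => //; left.
by move=> z [s hs <-]; apply: h.
Qed.

Lemma alpha_mono v1 v2 : 0 <= v1 -> v1 <= v2 -> alpha x v2 <= alpha x v1.
Proof.
move=> h1 h12; apply: alpha_ge => s [->|hs]; first by apply: alpha_ub => //; left.
by apply: alpha_ub => //; right; exact: le_trans hs.
Qed.

Lemma alpha_lip v1 v2 : 0 <= v1 -> v1 <= v2 -> alpha x v1 <= alpha x v2 + (v2 - v1).
Proof.
move=> h1 h12; have h2 : 0 <= v2 by exact: le_trans h12.
apply: alpha_ge => s hs.
have [hle|hlt] := leP v2 s.
  have := alpha_ub h2 (or_intror hle); lra.
case: hs => [->|hs]; first by have := alpha_ub h2 (or_introl erefl); lra.
have hs0 : 0 <= s by exact: le_trans hs.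
case: hx => _ [_ hL]; have := hL s v2 hs0 h2.
have -> : `|s - v2| = v2 - s by rewrite ltr0_norm ?subr_lt0 // opprB.
move=> /ler_normlW hh.
have := alpha_ub h2 (or_intror (lexx v2)); lra.
Qed.

Lemma Tcases t u : 0 <= u -> u <= t ->
  let a := 1 - alpha x (1 - t + u) in
  let lo := x 0 - t + u in let hi := x 0 + t - u in
  (a <= lo /\ Tt t x u = lo) \/ (lo < a /\ hi <= a /\ Tt t x u = hi)
  \/ (lo < a /\ a < hi /\ Tt t x u = a).
Proof.
move=> u0 ut a lo hi; rewrite /Tt.
have -> : (u == -1) = false by apply/negbTE; rewrite gt_eqF // (lt_le_trans _ u0) // ltrN10.
have [tu|tu] := leP t u.
  have ut' : u = t by apply/le_anti; rewrite ut tu.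
  subst u; rewrite subrr.
  have [h|h] := leP a lo; [left; split=> //; rewrite /lo; lra|].
  right; left; rewrite /hi /lo in h *; split; [|split]; lra.
rewrite -/a -/lo -/hi.
have [h|h] := leP a lo; first by left.
have [h'|h'] := leP hi a; first by right; left.
by right; right.
Qed.

End H.


Lemma arith (R : realType) (x0 t u1 u2 a1 a2 T1 T2 : R) :
  0 <= u1 -> u1 <= u2 -> u2 <= t ->
  a2 <= a1 -> a1 <= a2 + (u2 - u1) ->
  (1 - a1 <= x0 - t + u1 /\ T1 = x0 - t + u1) \/
  (x0 - t + u1 < 1 - a1 /\ x0 + t - u1 <= 1 - a1 /\ T1 = x0 + t - u1) \/
  (x0 - t + u1 < 1 - a1 /\ 1 - a1 < x0 + t - u1 /\ T1 = 1 - a1) ->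
  (1 - a2 <= x0 - t + u2 /\ T2 = x0 - t + u2) \/
  (x0 - t + u2 < 1 - a2 /\ x0 + t - u2 <= 1 - a2 /\ T2 = x0 + t - u2) \/
  (x0 - t + u2 < 1 - a2 /\ 1 - a2 < x0 + t - u2 /\ T2 = 1 - a2) ->
  [/\ (1 - a1 < T2 - u2 + u1 -> T1 = x0 - t + u1 /\ T2 = x0 - t + u2),
      (1 - a1 > T2 + u2 - u1 -> T1 = x0 + t - u1 /\ T2 = x0 + t - u2)
    & (`|1 - a1 - T2| <= u2 - u1 -> T1 = 1 - a1)].
Proof.
move=> u10 u12 u2t m l C1 C2.
split.
- move=> h.
  case: C2 => [[c1 e]|[[c1 [c2 e]]|[c1 [c2 e]]]]; rewrite e in h *.
  + by case: C1 => [[d1 f]|[[d1 [d2 f]]|[d1 [d2 f]]]]; split => //; lra.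
  + lra.
  + lra.
- move=> h.
  case: C2 => [[c1 e]|[[c1 [c2 e]]|[c1 [c2 e]]]]; rewrite e in h *.
  + lra.
  + by case: C1 => [[d1 f]|[[d1 [d2 f]]|[d1 [d2 f]]]]; split => //; lra.
  + lra.
- move=> /ler_normlP [h1 h2].
  case: C2 => [[c1 e]|[[c1 [c2 e]]|[c1 [c2 e]]]]; rewrite e in h1 h2;
  by case: C1 => [[d1 f]|[[d1 [d2 f]]|[d1 [d2 f]]]]; rewrite f; lra.
Qed.

Theorem lemma2p3 (R : realType) (x : R -> R) (t u1 u2 : R) :
  inC x -> 0 <= t <= 1 -> 0 <= u1 -> u1 <= u2 -> u2 <= t ->
  [/\ (1 - alpha x (1 - t + u1) < Tt t x u2 - u2 + u1 ->
         Tt t x u1 = x 0 - t + u1 /\ Tt t x u2 = x 0 - t + u2),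
      (1 - alpha x (1 - t + u1) > Tt t x u2 + u2 - u1 ->
         Tt t x u1 = x 0 + t - u1 /\ Tt t x u2 = x 0 + t - u2)
    & (`|1 - alpha x (1 - t + u1) - Tt t x u2| <= u2 - u1 ->
         Tt t x u1 = 1 - alpha x (1 - t + u1))].
Proof.
move=> hx /andP[t0 t1] u10 u12 u2t.
have u20 : 0 <= u2 by exact: le_trans u12.
have u1t : u1 <= t by exact: le_trans u2t.
have v10 : 0 <= 1 - t + u1 by lra.
have v12 : 1 - t + u1 <= 1 - t + u2 by lra.
have m := alpha_mono hx v10 v12.
have l := alpha_lip hx v10 v12.
have C1 := Tcases x u10 u1t; have C2 := Tcases x u20 u2t; simpl in C1, C2.
have e : 1 - t + u2 - (1 - t + u1) = u2 - u1 by ring.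
rewrite e in l.
exact: (arith u10 u12 u2t m l C1 C2).
Qed.
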